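(* For any generalized causal team $T$ over a signature $\sigma$: $T\models^g\bigsqcup_{\mathcal F\in\mathbb F_\sigma}\Phi^{\mathcal F}$ if and only if $T$ is uniform.
   Context: A signature $\sigma=(\mathrm{Dom},\mathrm{Ran})$: $\mathrm{Dom}$ nonempty finite set of variables, each with nonempty finite range $\mathrm{Ran}(X)$; $\mathbf X=\mathbf x$ abbreviates $X_1=x_1\wedge\dots\wedge X_n=x_n$ ($\mathbf x\in\mathrm{Ran}(\mathbf X)=\prod\mathrm{Ran}(X_i)$), inconsistent if it contains $X=x,X=x'$ with $x\neq x'$. $\mathcal{CO}[\sigma]$-formulas: $\alpha::=X=x\mid\neg\alpha\mid\alpha\wedge\alpha\mid\alpha\vee\alpha\mid\mathbf X=\mathbf x\;\Box\!\!\rightarrow\alpha$; $\alpha\supset\beta$ abbreviates $\neg\alpha\vee\beta$; $\sqcup$ is the global disjunction ($T\models\varphi\sqcup\psi$ iff $T\models\varphi$ or $T\models\psi$), $\bigsqcup$ its iterated form. A system of functions $\mathcal F$: for each $V\in\mathrm{En}(\mathcal F)\subseteq\mathrm{Dom}$ parents $PA^{\mathcal F}_V\subseteq\mathrm{Dom}\setminus\{V\}$ and $\mathcal F_V:\mathrm{Ran}(PA^{\mathcal F}_V)\to\mathrm{Ran}(V)$; $\mathrm{Ex}(\mathcal F)=\mathrm{Dom}\setminus\mathrm{En}(\mathcal F)$; only recursive (acyclic parent graph) systems, forming the finite set $\mathbb F_\sigma$. An assignment $s$ ($s(X)\in\mathrm{Ran}(X)$) is compatible with $\mathcal F$ if $s(V)=\mathcal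 F_V(s(PA^{\mathcal F}_V))$ for $V\in\mathrm{En}(\mathcal F)$. A generalized causal team is a set $T$ of pairs $(s,\mathcal F)$ with $\mathcal F\in\mathbb F_\sigma$ and $s$ compatible with $\mathcal F$; $T^-=\{s:(s,\mathcal F)\in T\}$. For consistent $\mathbf X=\mathbf x$: $\mathcal F_{\mathbf X=\mathbf x}$ restricts $\mathcal F$ to $\mathrm{En}(\mathcal F)\setminus\mathbf X$; $s^{\mathcal F}_{\mathbf X=\mathbf x}$: $X_i\mapsto x_i$, $V\mapsto s(V)$ for $V\in\mathrm{Ex}(\mathcal F)\setminus\mathbf X$, $V\mapsto\mathcal F_V(s^{\mathcal F}_{\mathbf X=\mathbf x}(PA^{\mathcal F}_V))$ for $V\in\mathrm{En}(\mathcal F)\setminus\mathbf X$; $T_{\mathbf X=\mathbf x}=\{(s^{\mathcal F}_{\mathbf X=\mathbf x},\mathcal F_{\mathbf X=\mathbf x}):(s,\mathcal F)\in T\}$. $\models^g$: $T\models X=x$ iff $s(X)=x$ for all $s\in T^-$; $T\models\neg\alpha$ iff $\{(s,\mathcal F)\}\not\models\alpha$ for all $(s,\mathcal F)\in T$; $\wedge$ classical; $T\models\varphi\vee\psi$ iff $T=T_1\cup T_2$ with $T_1\models\varphi$, $T_2\models\psi$; $T\models\mathbf X=\mathbf x\;\Box\!\!\rightarrow\varphi$ iff $\mathbf X=\mathbf x$ inconsistent or $T_{\mathbf X=\mathbf x}\models\varphi$. $\mathrm{Cn}(\mathcal F)$ = $\{V\in\mathrm{En}(\mathcal F):\mathcal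 F_V\text{ constant}\}$. $\mathcal F_V\sim\mathcal G_V$ iff $\mathcal F_V(\mathbf x\mathbf y)=\mathcal G_V(\mathbf x\mathbf z)$ for all $\mathbf x\in\mathrm{Ran}(PA^{\mathcal F}_V\cap PA^{\mathcal G}_V)$, $\mathbf y\in\mathrm{Ran}(PA^{\mathcal F}_V\setminus PA^{\mathcal G}_V)$, $\mathbf z\in\mathrm{Ran}(PA^{\mathcal G}_V\setminus PA^{\mathcal F}_V)$; $\mathcal F\sim\mathcal G$ iff $\mathrm{En}(\mathcal F)\setminus\mathrm{Cn}(\mathcal F)=\mathrm{En}(\mathcal G)\setminus\mathrm{Cn}(\mathcal G)$ and $\mathcal F_V\sim\mathcal G_V$ for each such $V$. $T$ is uniform if $\mathcal F\sim\mathcal G$ for all $(s,\mathcal F),(t,\mathcal G)\in T$ (the empty team is uniform). With $\mathbf W_V$ listing $\mathrm{Dom}\setminus\{V\}$: $\Phi^{\mathcal F}:=\bigwedge_{V\in\mathrm{En}(\mathcal F)\setminus\mathrm{Cn}(\mathcal F)}\eta(V)\wedge\bigwedge_{V\notin\mathrm{En}(\mathcal F)\setminus\mathrm{Cn}(\mathcal F)}\xi(V)$, where $\eta(V)$ is the conjunction of all $(\mathbf W=\mathbf w\wedge PA^{\mathcal F}_V=\mathbf p)\;\Box\!\!\rightarrow V=\mathcal F_V(\mathbf p)$ ($\mathbf W$ listing $\mathrm{Dom}\setminus(PA^{\mathcal F}_V\cup\{V\})$, $\mathbf w\in\mathrm{Ran}(\mathbf W)$, $\mathbf p\in\mathrm{Ran}(PA^{\mathcal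 F}_V)$) and $\xi(V)$ is the conjunction of all $V=v\supset(\mathbf W_V=\mathbf w\;\Box\!\!\rightarrow V=v)$ ($v\in\mathrm{Ran}(V)$, $\mathbf w\in\mathrm{Ran}(\mathbf W_V)$). *)

(* Defs.v *)
From mathcomp Require Import all_boot.

Set Implicit Arguments.
Unset Strict Implicit.
Unset Printing Implicit Defensive.

(* A signature: nonempty finite set of variables Dom, each with a nonempty
   finite range.  Nonemptiness is recorded by witnesses. *)
Record signature := Signature {
  Dom : finType;
  Ran : Dom -> finType;
  dom_wit : Dom;
  ran_wit : forall X : Dom, Ran X
}.

Section CausalTeams.
Variable sg : signature.
Local Notation D := (Dom sg).
Local Notation Rn := (@Ran sg).

Definition asg := forall X : D, Rn X.
(* finite enumeration of assignments (used to build finite conjunctions) *)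
Definition fasg := {dffun forall X : D, Rn X}.

Definition ranset (P : {set D}) :=
  {dffun forall Y : {Y : D | Y \in P}, Rn (sval Y)}.

Definition restr (s : asg) (P : {set D}) : ranset P :=
  @finfun _ (fun Y : {Y : D | Y \in P} => Rn (sval Y)) (fun Y => s (sval Y)).

(* A system of functions: endogenous set En, parents PA_V, and functions
   F_V : Ran(PA_V) -> Ran(V).  (PA_V and F_V are only meaningful for V in En.) *)
Record sys := Sys {
  En : {set D};
  PA : D -> {set D};
  Fn : forall V : D, ranset (PA V) -> Rn V
}.
Arguments Fn : clear implicits.

(* recursive = acyclic parent graph (witnessed by a strictly increasing rank) *)
Definition recursive (F : sys) : Prop :=
  exists r : D -> nat, forall V Y, V \in En F -> Y \in PA F V -> r Y < r V.

Definition compatible (s : asg) (F : sys) : Prop :=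
  forall V, V \in En F -> s V = Fn F V (restr s (PA F V)).

Definition lit := {X : D & Rn X}.

Inductive form :=
| FEq (X : D) (x : Rn X)
| FNeg (a : form)
| FAnd (a b : form)
| FOr (a b : form)
| FCf (ant : seq lit) (a : form).

Definition FImp (a b : form) := FOr (FNeg a) b.

Definition inconsistent (ant : seq lit) : bool :=
  has (fun a => has (fun b => (tag a == tag b) && (a != b)) ant) ant.

Definition lit_at (V : D) (a : lit) : option (Rn V) :=
  match tag a =P V with
  | ReflectT e => Some (eq_rect (tag a) Rn (tagged a) V e)
  | ReflectF _ => None
  end.

Definition lookup (ant : seq lit) (V : D) : option (Rn V) :=
  foldr (fun a r => if lit_at V a is Some x then Some x else r) None ant.

Definition sys_int (ant : seq lit) (F : sys) : sys :=
  Sys (En F :\: [set V | lookup ant V != None]) (Fn F).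

Definition int_step (ant : seq lit) (F : sys) (s t : asg) : asg :=
  fun V => match lookup ant V with
           | Some x => x
           | None => if V \in En F then Fn F V (restr t (PA F V)) else s V
           end.

(* s^F_{X=x}: for recursive F, #|Dom| iterations reach the unique solution of
   the recursive definition in the paper. *)
Definition asg_int (ant : seq lit) (F : sys) (s : asg) : asg :=
  iter #|D| (int_step ant F s) s.

Definition team := asg -> sys -> Prop.

Definition gcteam (T : team) : Prop :=
  forall s F, T s F -> recursive F /\ compatible s F.

Definition single (s : asg) (F : sys) : team := fun s' F' => s' = s /\ F' = F.

Definition team_int (ant : seq lit) (T : team) : team :=
  fun t G => exists s F, T s F /\ t = asg_int ant F s /\ G = sys_int ant F.

Fixpoint sat (phi : form) (T : team) {struct phi} : Prop :=
  match phi with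
  | FEq X x => forall s F, T s F -> s X = x
  | FNeg a => forall s F, T s F -> ~ sat a (single s F)
  | FAnd a b => sat a T /\ sat b T
  | FOr a b => exists T1 T2 : team,
      (forall s F, T s F <-> (T1 s F \/ T2 s F)) /\ sat a T1 /\ sat b T2
  | FCf ant a => inconsistent ant \/ sat a (team_int ant T)
  end.

Definition constb (F : sys) (V : D) : bool :=
  [forall p : ranset (PA F V), forall q : ranset (PA F V), Fn F V p == Fn F V q].

Definition nonconst (F : sys) (V : D) : bool := (V \in En F) && ~~ constb F V.

Definition simV (F G : sys) (V : D) : Prop :=
  forall (p : ranset (PA F V)) (q : ranset (PA G V)),
    (forall Y (h1 : Y \in PA F V) (h2 : Y \in PA G V),
        p (exist _ Y h1) = q (exist _ Y h2)) ->
    Fn F V p = Fn G V q.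

Definition simsys (F G : sys) : Prop :=
  (forall V, nonconst F V = nonconst G V) /\
  (forall V, nonconst F V -> simV F G V).

Definition uniform (T : team) : Prop :=
  forall s F t G, T s F -> T t G -> simsys F G.

(* the formula T (tautology) used for the (never occurring) empty conjunction *)
Definition FTop : form :=
  FOr (FNeg (FEq (@ran_wit sg (dom_wit sg)))) (FEq (@ran_wit sg (dom_wit sg))).

Definition bigAnd (l : seq form) : form :=
  if l is a :: l' then foldl FAnd a l' else FTop.

Definition ant_except (V : D) (u : fasg) : seq lit :=
  [seq Tagged Rn (u Y) | Y <- enum D & Y != V].

(* eta(V): all (W = w /\ PA_V = p) []-> V = F_V(p); the pair (w, p) ranges over
   the assignments of Dom \ {V}, enumerated via full assignments u. *)
Definition eta (F : sys) (V : D) : form :=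
  bigAnd [seq FCf (ant_except V u) (FEq (Fn F V (restr (fun X => u X) (PA F V))))
         | u <- enum {: fasg}].

Definition xi (V : D) : form :=
  bigAnd [seq FImp (FEq v) (FCf (ant_except V u) (FEq v))
         | v <- enum (Rn V), u <- enum {: fasg}].

Definition Phi (F : sys) : form :=
  bigAnd [seq (if nonconst F V then eta F V else xi V) | V <- enum D].

Definition sat_bigsqcup_Phi (T : team) : Prop :=
  exists F : sys, recursive F /\ sat (Phi F) T.

End CausalTeams.

(* Main.v *)
Require Import Defs.
From mathcomp Require Import all_boot.
From Stdlib Require Import Classical.
Set Implicit Arguments. Unset Strict Implicit. Unset Printing Implicit Defensive.

Definition extA (sg : signature) (P : {set Dom sg}) (p : ranset P) (d : asg sg) (X : Dom sg) : Ran X :=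
  match @idP (X \in P) with ReflectT h => p (exist _ X h) | ReflectF _ => d X end.

Lemma extA_in sg P (p : ranset P) d (X : Dom sg) (h : X \in P) : extA p d X = p (exist _ X h).
Proof. rewrite /extA; destruct idP as [h'|h']; last by rewrite h in h'.
by rewrite (bool_irrelevance h h'). Qed.

Lemma extA_out sg P (p : ranset P) d (X : Dom sg) : X \notin P -> extA p d X = d X.
Proof. move=> hX; rewrite /extA; destruct idP as [h'|h'] => //; by rewrite h' in hX. Qed.

Lemma restr_ext sg P (p : ranset P) (d : asg sg) : restr (extA p d) P = p.
Proof. apply/ffunP => -[Y h]; rewrite ffunE /=. exact: extA_in. Qed.

Lemma restr_eq sg (t u : asg sg) (P : {set Dom sg}) : (forall Y, Y \in P -> t Y = u Y) -> restr t P = restr u P.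
Proof. move=> H; apply/ffunP => -[Y h]; rewrite !ffunE /=; exact: H. Qed.

Definition tofasg sg (t : asg sg) : fasg sg := [ffun X => t X].
Lemma tofasgE sg (t : asg sg) X : tofasg t X = t X.
Proof. by rewrite ffunE. Qed.

Lemma lit_at_T sg (u : asg sg) Y V : lit_at V (Tagged (@Ran sg) (u Y)) = if Y == V then Some (u V) else None.
Proof. rewrite /lit_at /=. case: (Y =P V) => [e|/eqP ne]; subst; rewrite ?eqxx ?(negbTE ne) //. Qed.

Lemma lookup_map sg (u : asg sg) s V :
  lookup [seq Tagged (@Ran sg) (u Y) | Y <- s] V = if V \in s then Some (u V) else None.
Proof. elim: s => //= Y s IH; rewrite lit_at_T in_cons IH eq_sym. by case: (V == Y). Qed.

Lemma lookup_ant sg V (u : fasg sg) Y : lookup (ant_except V u) Y = if Y != V then Some (u Y) else None.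
Proof. rewrite /ant_except (lookup_map (fun X => u X)) mem_filter mem_enum andbT //. Qed.

Lemma ant_cons sg V (u : fasg sg) : inconsistent (ant_except V u) = false.
Proof.
apply/negbTE/hasPn => a /mapP [Y _ ->]; apply/hasPn => b /mapP [Z _ ->] /=.
apply/negP => /andP [/eqP e]; subst Z; by rewrite eqxx.
Qed.

Definition val sg (G : sys sg) (s : asg sg) (u : fasg sg) V :=
  if V \in En G then @Fn _ G V (restr (fun X => u X) (PA G V)) else s V.

Lemma step_off sg V (u : fasg sg) G s t Y : Y != V -> int_step (ant_except V u) G s t Y = u Y.
Proof. by move=> h; rewrite /int_step lookup_ant h. Qed.

Lemma asg_int_V sg (G : sys sg) s (u : fasg sg) V : (V \in En G -> V \notin PA G V) ->
  asg_int (ant_except V u) G s V = val G s u V.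
Proof.
move=> hP; rewrite /asg_int /val.
have : 0 < #|Dom sg| by apply/card_gt0P; exists (dom_wit sg).
case E: #|Dom sg| => [//|n] _.
rewrite iterS {1}/int_step lookup_ant eqxx /=.
case hV: (V \in En G) => //; congr (@Fn _ G V _); apply: restr_eq => Y hY.
have YV : Y != V by apply/eqP => e; subst Y; move: (hP hV); rewrite hY.
case: n E => [E|n E].
  exfalso; move: YV; have /card_le1_eqP H : #|Dom sg| <= 1 by rewrite E.
  by move=> /eqP; apply; apply: H.
by rewrite iterS step_off.
Qed.

Definition Pall A (P : A -> Prop) (l : seq A) := foldr (fun x acc => P x /\ acc) True l.

Lemma Pall_mem (A : eqType) (P : A -> Prop) (l : seq A) : Pall P l <-> (forall x, x \in l -> P x).
Proof.
elim: l => [|a l IH] /=; first by split.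
split.
  move=> [Pa /IH H] x; rewrite in_cons => /orP [/eqP -> //|]; exact: H.
move=> H; split; first by apply: H; rewrite mem_head.
by apply/IH => x hx; apply: H; rewrite in_cons hx orbT.
Qed.

Lemma Pall_map A B (P : B -> Prop) (g : A -> B) l : Pall P (map g l) <-> Pall (fun x => P (g x)) l.
Proof. elim: l => [|a l IH] /=; first by split. by split => -[h1 h2]; split => //; apply/IH. Qed.

Lemma Pall_flatten A (P : A -> Prop) (L : seq (seq A)) : Pall P (flatten L) <-> Pall (Pall P) L.
Proof.
elim: L => [|l L IH] /=; first by split.
elim: l => [|a l IH2] /=; first by split => [/IH|[_ /IH]].
split; first by move=> [Pa /IH2 [h1 h2]].
by move=> [[Pa h1] h2]; split => //; apply/IH2.
Qed.

Lemma sat_FTop sg (T : team sg) : sat (FTop sg) T.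
Proof.
rewrite /FTop /=; set X := dom_wit sg; set w := ran_wit X.
exists (fun s F => T s F /\ s X <> w), (fun s F => T s F /\ s X = w); split; last split.
- move=> s F; split; last by case=> -[].
  by move=> hT; case: (eqVneq (s X) w) => [e|/eqP ne]; [right|left].
- by move=> s F [_ ne] H; apply: ne; apply: (H s F).
- by move=> s F [].
Qed.

Lemma sat_foldl sg (T : team sg) a l : sat (foldl (@FAnd sg) a l) T <-> sat a T /\ Pall (fun f => sat f T) l.
Proof.
elim: l a => [|b l IH] a /=; first by split => [h|[]].
rewrite IH /=; tauto.
Qed.

Lemma sat_bigAnd sg (T : team sg) l : sat (bigAnd l) T <-> Pall (fun f => sat f T) l.
Proof.
case: l => [|a l] /=; first by split => // _; apply: sat_FTop.
rewrite sat_foldl; tauto.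
Qed.

Lemma sat_cf sg (T : team sg) V (u : fasg sg) (x : Ran V) :
  sat (FCf (ant_except V u) (FEq x)) T <-> forall s G, T s G -> asg_int (ant_except V u) G s V = x.
Proof.
rewrite /= ant_cons; split.
  case=> [//|H] s G hT; apply: (H _ (sys_int (ant_except V u) G)); by exists s, G.
move=> H; right => t G' [s [G [hT [-> _]]]]; exact: H.
Qed.

Lemma sat_imp sg (T : team sg) V (u : fasg sg) (v : Ran V) :
  sat (FImp (FEq v) (FCf (ant_except V u) (FEq v))) T <->
  forall s G, T s G -> s V = v -> asg_int (ant_except V u) G s V = v.
Proof.
split.
  move=> [T1 [T2 [HT [H1 /sat_cf H2]]]] s G hT hv.
  case/HT: hT => [h1|h2]; last exact: H2.
  exfalso; apply: (H1 _ _ h1) => s' G' [-> _] //.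
move=> H; exists (fun s F => T s F /\ s V <> v), (fun s F => T s F /\ s V = v); split; last split.
- move=> s F; split; last by case=> -[].
  by move=> hT; case: (eqVneq (s V) v) => [e|/eqP ne]; [right|left].
- by move=> s F [_ ne] H'; apply: ne; apply: (H' s F).
- by apply/sat_cf => s G [hT hv]; apply: H.
Qed.

Lemma rec_noself sg (G : sys sg) V : recursive G -> V \in En G -> V \notin PA G V.
Proof. move=> [r Hr] hV; apply/negP => hP; have := Hr V V hV hP; by rewrite ltnn. Qed.

Definition cond sg (F G : sys sg) (s : asg sg) V (u : fasg sg) : Prop :=
  if nonconst F V then val G s u V = @Fn _ F V (restr (fun X => u X) (PA F V))
  else val G s u V = s V.

Lemma sat_Phi sg (T : team sg) F : gcteam T ->
  sat (Phi F) T <-> forall s G, T s G -> forall V u, cond F G s V u.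
Proof.
move=> gT.
have AV : forall s G V u, T s G -> asg_int (ant_except V u) G s V = val G s u V.
  move=> s G V u hT; apply: asg_int_V; apply: rec_noself; exact: (gT s G hT).1.
rewrite /Phi sat_bigAnd Pall_map Pall_mem.
have key : forall V, sat (if nonconst F V then eta F V else xi V) T <->
   (forall s G, T s G -> forall u, cond F G s V u).
  move=> V; rewrite /cond; case: (nonconst F V).
    rewrite /eta sat_bigAnd Pall_map Pall_mem; split.
      move=> H s G hT u; rewrite -AV //; move/sat_cf: (H u (mem_enum _ u)); apply; exact.
    move=> H u _; apply/sat_cf => s G hT; rewrite AV //; exact: H.
  rewrite /xi sat_bigAnd Pall_flatten Pall_map Pall_mem; split.
    move=> H s G hT u; rewrite -AV //.
    have := H (s V) (mem_enum _ _); rewrite Pall_map Pall_mem => H2.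
    by move/sat_imp: (H2 u (mem_enum _ u)); apply.
  move=> H v _; rewrite Pall_map Pall_mem => u _; apply/sat_imp => s G hT <-.
  rewrite AV //; exact: H.
split.
  move=> H s G hT V u; have /key H2 := H V (mem_enum _ V); exact: H2.
move=> H V _; apply/key => s G hT u; exact: H.
Qed.

Lemma restr_tof sg (t : asg sg) P : restr (fun X => tofasg t X) P = restr t P.
Proof. apply: restr_eq => Y _; exact: tofasgE. Qed.

Lemma constbP sg (G : sys sg) V :
  (forall p q : ranset (PA G V), @Fn _ G V p = @Fn _ G V q) -> constb G V.
Proof. move=> H; apply/forallP => p; apply/forallP => q; apply/eqP; exact: H. Qed.

Lemma constbE sg (G : sys sg) V p q : constb G V -> @Fn _ G V p = @Fn _ G V q.
Proof. by move=> /forallP /(_ p) /forallP /(_ q) /eqP. Qed.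

Lemma nonconst_eq sg (F G : sys sg) s V : (forall u, cond F G s V u) -> nonconst G V = nonconst F V.
Proof.
rewrite /cond; case hF: (nonconst F V) => C.
  apply/negPn/negP => hG.
  have cst : forall u, val G s u V = val G s (tofasg s) V.
    move=> u; rewrite /val; case hEn: (V \in En G) => //.
    apply: constbE; move: hG; rewrite /nonconst hEn /=; by case: (constb G V).
  move: hF; rewrite /nonconst => /andP [_ /negP]; apply; apply: constbP => p q.
  rewrite -(restr_ext p s) -(restr_ext q s) -!(restr_tof (extA _ s)) -!C; by rewrite !cst.
rewrite /nonconst; case hEn: (V \in En G) => //=; apply/negbF/constbP => p q.
have E : forall p : ranset (PA G V), @Fn _ G V p = s V.
  move=> p'; rewrite -(restr_ext p' s) -(restr_tof (extA _ s)); move: (C (tofasg (extA p' s))).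
  by rewrite /val hEn.
by rewrite !E.
Qed.

Theorem corollary3p5 (sg : signature) (T : team sg) :
  gcteam T -> (sat_bigsqcup_Phi T <-> uniform T).
Proof.
move=> gT; split.
  move=> [F [_ /(sat_Phi _ gT) C]] s G t H hs ht.
  have eG := fun V => nonconst_eq (C s G hs V).
  have eH := fun V => nonconst_eq (C t H ht V).
  split; first by move=> V; rewrite eG eH.
  move=> V hG p q Hpq.
  have hF : nonconst F V by rewrite -eG.
  have hH : nonconst H V by rewrite eH.
  set u := tofasg (extA p (extA q s)).
  have CG := C s G hs V u; have CH := C t H ht V u.
  move: CG CH; rewrite /cond hF /val.
  move: (hG) (hH) => /andP [-> _] /andP [-> _] CG CH.
  have rG : restr (fun X => u X) (PA G V) = p by rewrite restr_tof restr_ext.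
  have rH : restr (fun X => u X) (PA H V) = q.
    rewrite restr_tof; apply/ffunP => -[Y h]; rewrite ffunE /=.
    case: (boolP (Y \in PA G V)) => hY.
      by rewrite (extA_in _ _ hY) Hpq.
    by rewrite extA_out // (extA_in _ _ h).
  by rewrite -rG -rH CG CH.
move=> U.
case: (classic (exists s G, T s G)) => [[s0 [G0 h0]]|no].
  exists G0; split; first exact: (gT _ _ h0).1.
  apply/(sat_Phi _ gT) => s G hs V u.
  have [E1 E2] := U s0 G0 s G h0 hs.
  rewrite /cond /val; case hF: (nonconst G0 V).
    have hG : nonconst G V by rewrite -E1.
    move: (hG) => /andP [-> _].
    symmetry; apply: (E2 V hF) => Y h1 h2; by rewrite !ffunE.
  case hEn: (V \in En G) => //.
  have cG : constb G V.
    move: (E1 V); rewrite hF /nonconst hEn /=; by case: (constb G V).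
  rewrite ((gT s G hs).2 V hEn); exact: constbE.
exists (@Sys sg set0 (fun _ => set0) (fun V _ => ran_wit V)); split.
  by exists (fun _ => 0) => V Y; rewrite inE.
apply/(sat_Phi _ gT) => s G hs; exfalso; apply: no; by exists s, G.
Qed.
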